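(* Let $\Sigma$ be a finite set of tokens, $c$ a context, $M_1,M_2$ language models, and $f$ a min-bounded function. Then $$\overline{f_c}(M_1,M_2)\le\sqrt{MAE_c(M_1,M_2)}.$$
   Context: Let $n=|\Sigma|$. A context is a finite sequence of tokens from $\Sigma$. A language model $M$ assigns to every context $c$ and token $t\in\Sigma$ a probability $p_M(t\mid c)>0$, with $\sum_{t\in\Sigma}p_M(t\mid c)=1$. For $g:\Sigma\to\mathbb{R}_{>0}$, $GM(g(t)):=\exp\big(\tfrac1n\sum_{t\in\Sigma}\log g(t)\big)$. Typical probability: $tp_c(M):=GM(p_M(t\mid c))$; relative probability: $rp_M(t\mid c):=p_M(t\mid c)/tp_c(M)$. A function $f:\mathbb{R}_{>0}^2\to\mathbb{R}_{>0}$ is proper-avg if $\min(x,y)\le f(x,y)\le\max(x,y)$ for all $x,y>0$; it is min-bounded if it is proper-avg and there is a constant $\lambda_f$ with $f(x,y)\le\lambda_f\min(x,y)$ for all $x,y>0$. For such $f$, set $M(t\mid c):=f(rp_{M_1}(t\mid c),rp_{M_2}(t\mid c))$ and define $\overline{f_c}(M_1,M_2):=GM\big(M(t\mid c)^{-1}\big)$. The mean absolute exposure is $MAE_c(M_1,M_2):=GM\Big(\max\Big(\tfrac{rp_{M_1}(t\mid c)}{rp_{M_2}(t\mid c)},\tfrac{rp_{M_2}(t\mid c)}{rp_{M_1}(t\mid c)}\Big)\Big)$. *)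

(* Defs.v *)
From mathcomp Require Import all_boot all_order all_algebra.
From mathcomp Require Import reals sequences exp.
Set Implicit Arguments. Unset Strict Implicit. Unset Printing Implicit Defensive.
Import Order.TTheory GRing.Theory Num.Theory.
Local Open Scope ring_scope.

Section Defs.
Variable R : realType.
Variable T : finType.

Definition context := seq T.
Definition model := context -> T -> R.

Definition is_language_model (M : model) : Prop :=
  (forall c t, 0 < M c t) /\ (forall c, \sum_(t : T) M c t = 1).

Definition GM (g : T -> R) : R :=
  expR (#|T|%:R^-1 * \sum_(t : T) ln (g t)).

Definition tp (M : model) (c : context) : R := GM (fun t => M c t).
Definition rp (M : model) (c : context) (t : T) : R := M c t / tp M c.

Definition fbar (f : R -> R -> R) (M1 M2 : model) (c : context) : R :=
  GM (fun t => (f (rp M1 c t) (rp M2 c t))^-1).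

Definition MAE (M1 M2 : model) (c : context) : R :=
  GM (fun t => Num.max (rp M1 c t / rp M2 c t) (rp M2 c t / rp M1 c t)).
End Defs.

Definition proper_avg (R : realType) (f : R -> R -> R) : Prop :=
  forall x y : R, 0 < x -> 0 < y -> Num.min x y <= f x y <= Num.max x y.

Definition min_bounded (R : realType) (f : R -> R -> R) : Prop :=
  proper_avg f /\
  exists lam : R, forall x y : R, 0 < x -> 0 < y -> f x y <= lam * Num.min x y.

(* Main.v *)
Require Import Defs.
From mathcomp Require Import all_boot all_order all_algebra.
From mathcomp Require Import reals sequences exp.
From mathcomp Require Import lra.
Import Order.TTheory GRing.Theory Num.Theory.
Local Open Scope ring_scope.

Lemma rp_gt0 (R : realType) (T : finType) (M : model R T) c t :
  is_language_model M -> 0 < rp M c t.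
Proof.
move=> [Hp _]; rewrite /rp divr_gt0 // /tp /GM expR_gt0 //.
Qed.

Lemma sum_ln_rp (R : realType) (T : finType) (M : model R T) c :
  is_language_model M -> \sum_(t : T) ln (rp M c t) = 0.
Proof.
move=> [Hp _].
have -> : \sum_(t : T) ln (rp M c t) =
   \sum_(t : T) ln (M c t) - #|T|%:R * (#|T|%:R^-1 * \sum_(t : T) ln (M c t)).
  rewrite (eq_bigr (fun t => ln (M c t) - #|T|%:R^-1 * \sum_(t : T) ln (M c t))).
    by rewrite sumrB sumr_const mulr_natl.
  move=> t _.
  by rewrite /rp ln_div ?posrE ?Hp // /tp /GM ?expR_gt0 // expRK.
case: (posnP #|T|) => Hn.
  rewrite Hn mul0r subr0 big_pred0 // => t; exact: (card0_eq Hn).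
by rewrite mulrA mulfV ?mul1r ?subrr // pnatr_eq0 -lt0n Hn.
Qed.

Theorem lemma3 (R : realType) (T : finType) (c : context T)
  (M1 M2 : model R T) (f : R -> R -> R) :
  is_language_model M1 -> is_language_model M2 -> min_bounded f ->
  fbar f M1 M2 c <= Num.sqrt (MAE M1 M2 c).
Proof.
move=> H1 H2 [Hf _].
set n' := (#|T|%:R^-1 : R).
have n'0 : 0 <= n' by rewrite invr_ge0.
set la := fun t => ln (rp M1 c t).
set lb := fun t => ln (rp M2 c t).
set S1 := \sum_(t : T) Num.max (- la t) (- lb t).
have Hfbar : fbar f M1 M2 c <= expR (n' * S1).
  rewrite /fbar /GM ler_expR ler_wpM2l // /S1; apply: ler_sum => t _.
  have ha := @rp_gt0 _ _ _ c t H1; have hb := @rp_gt0 _ _ _ c t H2.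
  have /andP[hmin _] := Hf _ _ ha hb.
  have hm : 0 < Num.min (rp M1 c t) (rp M2 c t) by rewrite lt_min ha hb.
  have hfp : 0 < f (rp M1 c t) (rp M2 c t) by apply: lt_le_trans hmin.
  rewrite lnV ?posrE //.
  have := hmin; rewrite -ler_ln ?posrE // => hl.
  rewrite le_max /la /lb lerN2 lerN2.
  case: (leP (rp M1 c t) (rp M2 c t)) => h.
    by move: hl; rewrite (min_idPl h) => ->.
  by move: hl; rewrite (min_idPr (ltW h)) => ->; rewrite orbT.
have HMAE : MAE M1 M2 c = expR (n' * S1) ^+ 2.
  rewrite -expRM_natl /MAE /GM; congr expR.
  rewrite mulrCA; congr (_ * _).
  have s1 := @sum_ln_rp _ _ _ c H1; have s2 := @sum_ln_rp _ _ _ c H2.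
  have -> : \sum_(t : T) ln (Num.max (rp M1 c t / rp M2 c t) (rp M2 c t / rp M1 c t))
     = \sum_(t : T) (2 * Num.max (- la t) (- lb t) + la t + lb t).
    apply: eq_bigr => t _.
    have ha := @rp_gt0 _ _ _ c t H1; have hb := @rp_gt0 _ _ _ c t H2.
    have hab := divr_gt0 ha hb; have hba := divr_gt0 hb ha.
    rewrite /la /lb.
    case: (leP (rp M1 c t / rp M2 c t) (rp M2 c t / rp M1 c t)) => h.
      move: h; rewrite -ler_ln ?posrE //.
      rewrite (ln_div ha hb) (ln_div hb ha) => h2.
      rewrite (max_idPl _); first by lra.
      by rewrite lerN2; lra.
    move: (ltW h); rewrite -ler_ln ?posrE //.
    rewrite (ln_div ha hb) (ln_div hb ha) => h2.
    rewrite (max_idPr _); first by lra.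
    by rewrite lerN2; lra.
  rewrite !big_split /= -mulr_sumr.
  rewrite /la /lb s1 s2 /S1; lra.
rewrite HMAE sqrtr_sqr ger0_norm ?expR_ge0 //.
Qed.
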